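(* Let $R$ be a ring in which the set $\operatorname{Nil}(R)$ of nilpotent elements is a subring. Then every idempotent of the factor ring $R/\operatorname{Nil}^*(R)$ is central in $R/\operatorname{Nil}^*(R)$.
   Context: Rings are associative and not necessarily unital. $\operatorname{Nil}^*(R)$ denotes the upper nilradical of $R$, i.e. the sum of all nil two-sided ideals of $R$. *)

(* Defs.v *)
(* Rings here are associative but NOT necessarily unital,
   so a ring is given as an additive group (zmodType) together with an
   associative, bi-distributive multiplication. *)
From HB Require Import structures.
From mathcomp Require Import all_boot all_order all_algebra.
Set Implicit Arguments. Unset Strict Implicit. Unset Printing Implicit Defensive.
Import GRing.Theory.
Local Open Scope ring_scope.

Record is_rng (R : zmodType) (mul : R -> R -> R) : Prop := IsRng {
  rng_mulA : associative mul;
  rng_mulDl : left_distributive mul +%R;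
  rng_mulDr : right_distributive mul +%R
}.

Section Rng.
Variables (R : zmodType) (mul : R -> R -> R).

(* rpow x n = x^(n+1) (positive powers only; no unit). *)
Fixpoint rpow (x : R) (n : nat) : R :=
  match n with 0 => x | n'.+1 => mul x (rpow x n') end.

Definition nilpotent (x : R) : Prop := exists n : nat, rpow x n = 0.

Definition is_subring (S : R -> Prop) : Prop :=
  [/\ S 0, (forall a b, S a -> S b -> S (a - b)) &
      (forall a b, S a -> S b -> S (mul a b))].

Definition is_ideal (I : R -> Prop) : Prop :=
  [/\ I 0, (forall a b, I a -> I b -> I (a - b)),
      (forall r a, I a -> I (mul r a)) &
      (forall r a, I a -> I (mul a r))].

Definition nil_ideal (I : R -> Prop) : Prop :=
  is_ideal I /\ forall a, I a -> nilpotent a.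

(* Nil^*(R): the sum of all nil two-sided ideals, i.e. the set of finite
   sums of elements each lying in some nil ideal. *)
Definition upper_nilradical (x : R) : Prop :=
  exists s : seq R,
    (forall a, a \in s -> exists I, nil_ideal I /\ I a) /\
    x = \sum_(a <- s) a.

End Rng.

(* Main.v *)
Require Import Defs.
From mathcomp Require Import all_boot all_order all_algebra.
From Stdlib Require Import Setoid Morphisms.
Set Implicit Arguments. Unset Strict Implicit. Unset Printing Implicit Defensive.
Import GRing.Theory.
Local Open Scope ring_scope.

Section Gen.
Variables (R : zmodType) (m : R -> R -> R).
Hypothesis Hr : is_rng m.
Hypothesis Hs : is_subring m (nilpotent m).

Let mA : associative m := rng_mulA Hr.
Let mDl : left_distributive m +%R := rng_mulDl Hr.
Let mDr : right_distributive m +%R := rng_mulDr Hr.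

Lemma m0l a : m 0 a = 0.
Proof. by apply: (addrI (m 0 a)); rewrite -mDl !addr0. Qed.
Lemma m0r a : m a 0 = 0.
Proof. by apply: (addrI (m a 0)); rewrite -mDr !addr0. Qed.
Lemma mNl a b : m (- a) b = - m a b.
Proof. by apply/eqP; rewrite -addr_eq0 -mDl addNr m0l. Qed.
Lemma mNr a b : m a (- b) = - m a b.
Proof. by apply/eqP; rewrite -addr_eq0 -mDr addNr m0r. Qed.
Lemma mBl a b c : m (a - b) c = m a c - m b c.
Proof. by rewrite mDl mNl. Qed.
Lemma mBr a b c : m c (a - b) = m c a - m c b.
Proof. by rewrite mDr mNr. Qed.

Definition nil := nilpotent m.
Lemma nil0 : nil 0. Proof. by move: Hs; rewrite /is_subring; case. Qed.
Lemma nilB a b : nil a -> nil b -> nil (a - b). Proof. by move: Hs; rewrite /is_subring /nil; case=> _ h _; apply: h. Qed.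
Lemma nilM a b : nil a -> nil b -> nil (m a b). Proof. by move: Hs; rewrite /is_subring /nil; case=> _ _ h; apply: h. Qed.
Lemma nilN a : nil a -> nil (- a).
Proof. by move=> h; rewrite -sub0r; apply: nilB=> //; apply: nil0. Qed.
Lemma nilD a b : nil a -> nil b -> nil (a + b).
Proof. by move=> ha hb; rewrite -[b]opprK; apply: nilB=> //; apply: nilN. Qed.

Lemma rpowM z n k : m (rpow m z n) (rpow m z k) = rpow m z (n + k).+1.
Proof. by elim: n => [|n IH] //=; rewrite -mA IH. Qed.
Lemma rpow2 z n : rpow m (m z z) n = rpow m z (n.*2).+1.
Proof.
elim: n => [|n IH] //=; by rewrite IH -mA.
Qed.
Lemma nil_sq z : nil (m z z) -> nil z.
Proof. by case=> n h; exists (n.*2).+1; rewrite -rpow2. Qed.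

Definition J z := [/\ nil z, (forall r, nil (m r z)), (forall s, nil (m z s)) &
   (forall r s, nil (m (m r z) s))].

Lemma J0 : J 0.
Proof. split; move=> *; rewrite ?m0l ?m0r ?m0l; exact: nil0. Qed.
Lemma JB a b : J a -> J b -> J (a - b).
Proof.
case=> a1 a2 a3 a4 [b1 b2 b3 b4]; split; move=> *; rewrite ?mBl ?mBr ?mBl;
 by apply: nilB.
Qed.
Lemma JN a : J a -> J (- a).
Proof. by move=> h; rewrite -sub0r; apply: JB=> //; apply: J0. Qed.
Lemma JD a b : J a -> J b -> J (a + b).
Proof. by move=> ha hb; rewrite -[b]opprK; apply: JB=> //; apply: JN. Qed.
Lemma JMl r a : J a -> J (m r a).
Proof.
case=> a1 a2 a3 a4; split=> //; first by move=> t; rewrite mA.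
by move=> t s; rewrite mA.
Qed.
Lemma JMr r a : J a -> J (m a r).
Proof.
case=> a1 a2 a3 a4; split=> //; first by move=> t; rewrite mA.
  by move=> s; rewrite -mA.
by move=> t s; rewrite -!mA mA.
Qed.

Definition eqv a b := J (a - b).
Instance eqv_equiv : Equivalence eqv.
Proof.
split.
- by move=> a; rewrite /eqv subrr; apply: J0.
- by move=> a b h; rewrite /eqv -opprB; apply: JN.
- by move=> a b c h1 h2; rewrite /eqv -[a](subrK b) -addrA; apply: JD.
Qed.
Instance m_proper : Proper (eqv ==> eqv ==> eqv) m.
Proof.
move=> a a' ha b b' hb; rewrite /eqv.
have -> : m a b - m a' b' = m (a - a') b + m a' (b - b').
  by rewrite mBl mBr addrA subrK.
by apply: JD; [apply: JMr | apply: JMl].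
Qed.
Instance add_proper : Proper (eqv ==> eqv ==> eqv) (@GRing.add R).
Proof.
move=> a a' ha b b' hb; rewrite /eqv.
have -> : a + b - (a' + b') = (a - a') + (b - b').
  by rewrite opprD addrACA.
by apply: JD.
Qed.
Instance opp_proper : Proper (eqv ==> eqv) (@GRing.opp R).
Proof. by move=> a a' h; rewrite /eqv -opprD; apply: JN. Qed.

Lemma J_nil z : J z -> nil z. Proof. by case. Qed.
Lemma eqv_nil z z' : eqv z z' -> nil z' -> nil z.
Proof.
move=> h h'; rewrite -[z](subrK z') addrC; apply: nilD.
  exact: h'.
exact: (J_nil h).
Qed.
Lemma eqv_eq a b : a = b -> eqv a b. Proof. by move=> ->; reflexivity. Qed.

Variable e : R.
Hypothesis He : J (m e e - e).
Lemma E1 : eqv (m e e) e. Proof. exact: He. Qed.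
Lemma E2 a : eqv (m (m a e) e) (m a e).
Proof. rewrite -mA; setoid_rewrite E1; reflexivity. Qed.


Definition U w := m e w - m (m e w) e.
Definition V w := m w e - m e (m w e).

Ltac norm := repeat (rewrite mBl || rewrite mBr || rewrite mDl || rewrite mDr || rewrite mNl || rewrite mNr || rewrite mA);
  repeat (setoid_rewrite E2 || setoid_rewrite E1); apply: eqv_eq.

Lemma C1 w : eqv (m (U w) (U w)) 0.
Proof. rewrite /U. norm. by rewrite subrr. Qed.
Lemma C3 w s : eqv (m (U w) s) (m (U w) (V s) + U (m w s - m (m w e) s)).
Proof. rewrite /U /V. norm. by rewrite subrr subr0 [_ + (_ - _ - _)]addrC subrK. Qed.
Lemma C4 r w : eqv (m r (U w)) (m (V r) (U w) + U (m (m r e) w)).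
Proof. rewrite /U /V. norm. by rewrite subrK. Qed.

Lemma nilU w : nil (U w).
Proof. apply: nil_sq; apply: (eqv_nil (C1 w)); exact: nil0. Qed.
Lemma nilV w : nil (V w).
Proof.
have h : eqv (m (V w) (V w)) 0.
  by rewrite /V; norm; rewrite !subrr.
by apply: nil_sq; apply: (eqv_nil h); exact: nil0.
Qed.
Lemma nilUr w s : nil (m (U w) s).
Proof.
apply: (eqv_nil (C3 w s)); apply: nilD; last exact: nilU.
apply: nilM; [exact: nilU | exact: nilV].
Qed.
Lemma JU w : J (U w).
Proof.
split; first exact: nilU.
- move=> r; apply: (eqv_nil (C4 r w)); apply: nilD; last exact: nilU.
  apply: nilM; [exact: nilV | exact: nilU].
- exact: nilUr.
- move=> r s.
  have h : eqv (m (m r (U w)) s) (m (V r) (m (U w) s) + m (U (m (m r e) w)) s).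
    rewrite (C4 r w). rewrite mDl mA. reflexivity.
  apply: (eqv_nil h); apply: nilD; last exact: nilUr.
  apply: nilM; [exact: nilV | exact: nilUr].
Qed.
End Gen.

Section Flip.
Variables (R : zmodType) (m : R -> R -> R).
Hypothesis Hr : is_rng m.
Let mA : associative m := rng_mulA Hr.
Definition fm (a b : R) := m b a.

Lemma rng_flip : is_rng fm.
Proof.
case: Hr => h1 h2 h3; split.
- by move=> a b c; rewrite /fm h1.
- by move=> a b c; rewrite /fm h3.
- by move=> a b c; rewrite /fm h2.
Qed.

Lemma rpow_flip z n : rpow fm z n = rpow m z n.
Proof.
elim: n => [|n IH] //=; rewrite /fm IH.
by have := rpowM Hr z n 0; rewrite addn0 /= => ->.
Qed.

Lemma nil_flip z : nilpotent fm z <-> nilpotent m z.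
Proof. by split; case=> n h; exists n; rewrite ?rpow_flip // -rpow_flip. Qed.

Lemma J_flip z : J fm z -> J m z.
Proof.
case=> h1 h2 h3 h4; split.
- exact/nil_flip.
- by move=> r; apply/nil_flip; apply: h3.
- by move=> s; apply/nil_flip; apply: h2.
- by move=> r s; apply/nil_flip; have := h4 s r; rewrite /fm mA.
Qed.
Lemma flip_J z : J m z -> J fm z.
Proof.
case=> h1 h2 h3 h4; split.
- exact/nil_flip.
- by move=> r; apply/nil_flip; apply: h3.
- by move=> s; apply/nil_flip; apply: h2.
- by move=> r s; apply/nil_flip; have := h4 s r; rewrite /fm mA.
Qed.
End Flip.

Lemma upn_J (R : zmodType) (m : R -> R -> R) : is_rng m -> is_subring m (nilpotent m) ->
  forall z, upper_nilradical m z -> J m z.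
Proof.
move=> Hr Hs z [s [hs ->]].
elim: s hs => [|a s IH] hs; first by rewrite big_nil; apply: J0.
rewrite big_cons; apply: JD => //; last first.
  by apply: IH => b hb; apply: hs; rewrite in_cons hb orbT.
have [I [[[_ _ Il Ir] Inil] Ia]] := hs a (mem_head a s).
split.
- exact: Inil.
- by move=> r; apply: Inil; apply: Il.
- by move=> t; apply: Inil; apply: Ir.
- by move=> r t; apply: Inil; apply: Ir; apply: Il.
Qed.

Lemma J_upn (R : zmodType) (m : R -> R -> R) : is_rng m -> is_subring m (nilpotent m) ->
  forall z, J m z -> upper_nilradical m z.
Proof.
move=> Hr Hs z hz; exists [:: z]; split; last by rewrite big_seq1.
move=> a; rewrite inE => /eqP ->; exists (J m); split=> //; split.
  split; [exact: J0 | exact: JB | exact: JMl | exact: JMr].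
exact: J_nil.
Qed.

Theorem proposition3p1 (R : zmodType) (mul : R -> R -> R) :
  is_rng mul ->
  is_subring mul (nilpotent mul) ->
  forall x : R, upper_nilradical mul (mul x x - x) ->
  forall y : R, upper_nilradical mul (mul x y - mul y x).
Proof.
move=> Hr Hs x Hx y.
have HsF : is_subring (fm mul) (nilpotent (fm mul)).
  move: Hs; rewrite /is_subring; case=> h1 h2 h3; split.
  - exact/(nil_flip Hr).
  - by move=> a b /(nil_flip Hr) ha /(nil_flip Hr) hb; apply/(nil_flip Hr); apply: h2.
  - by move=> a b /(nil_flip Hr) ha /(nil_flip Hr) hb; apply/(nil_flip Hr); apply: h3.
have HJ := upn_J Hr Hs Hx.
have H1 := JU Hr Hs HJ y.
have H2 : J mul (U (fm mul) x y).
  apply: (J_flip Hr); apply: JU; [exact: rng_flip | exact: HsF | exact: (flip_J Hr)].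
apply: (J_upn Hr Hs).
have -> : mul x y - mul y x = U mul x y - U (fm mul) x y.
  rewrite /U /fm (rng_mulA Hr) opprB addrA subrK //.
exact: JB.
Qed.
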